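(* Two spatial matrices of the same size $m\times n\times q$ over a field $k$ are equivalent if and only if their regular parts are equivalent.
   Context: An $m\times n\times q$ spatial matrix $\mathbb A=[a_{ijk}]$ has entries in $k$. Two spatial matrices are equivalent if $a'_{i'j'k'}=\sum_{i,j,k}a_{ijk}r_{ii'}s_{jj'}t_{kk'}$ for nonsingular matrices $R=[r_{ii'}]$ ($m\times m$), $S=[s_{jj'}]$ ($n\times n$), $T=[t_{kk'}]$ ($q\times q$). Let $r_1$ be the dimension of the span of the matrices $[a_{ijk}]_{j,k}$ ($i=1,\dots,m$), $r_2$ that of $[a_{ijk}]_{i,k}$ ($j=1,\dots,n$), $r_3$ that of $[a_{ijk}]_{i,j}$ ($k=1,\dots,q$); $\mathrm{rank}\,\mathbb A=(r_1,r_2,r_3)$. $\mathbb A$ is regular if $\mathrm{rank}\,\mathbb A=(m,n,q)$. A regular part of $\mathbb A$ is a regular $r_1\times r_2\times r_3$ spatial matrix $\mathbb A'$ such that $\mathbb A$ is equivalent to $\mathbb A'\oplus\mathbb O$, where $\mathbb O$ is the zero $(m-r_1)\times(n-r_2)\times(q-r_3)$ spatial matrix and $\oplus$ denotes the block-diagonal spatial matrix (entries outside the two diagonal blocks are zero). *)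

(* Defs.v *)
From mathcomp Require Import all_boot all_order all_algebra.
Set Implicit Arguments. Unset Strict Implicit. Unset Printing Implicit Defensive.
Import GRing.Theory.
Local Open Scope ring_scope.

Definition spmx (F : Type) (m n q : nat) := 'I_m -> 'I_n -> 'I_q -> F.

Section Spatial.
Variable F : fieldType.

Definition sp_equiv (m n q : nat) (A B : spmx F m n q) : Prop :=
  exists (R : 'M[F]_m) (S : 'M[F]_n) (T : 'M[F]_q),
    [/\ R \in unitmx, S \in unitmx, T \in unitmx &
      forall i' j' k',
        B i' j' k' = \sum_(i < m) \sum_(j < n) \sum_(k < q)
                        A i j k * R i i' * S j j' * T k k'].

(* The three families of slices, each slice flattened (mxvec) to a row;
   the dimension of the span of the slices is the rank of that matrix. *)
Definition slices1 m n q (A : spmx F m n q) : 'M[F]_(m, n * q) :=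
  \matrix_(i < m) mxvec (\matrix_(j < n, k < q) A i j k).
Definition slices2 m n q (A : spmx F m n q) : 'M[F]_(n, m * q) :=
  \matrix_(j < n) mxvec (\matrix_(i < m, k < q) A i j k).
Definition slices3 m n q (A : spmx F m n q) : 'M[F]_(q, m * n) :=
  \matrix_(k < q) mxvec (\matrix_(i < m, j < n) A i j k).

Definition sprank m n q (A : spmx F m n q) : nat * nat * nat :=
  (\rank (slices1 A), \rank (slices2 A), \rank (slices3 A)).

Definition sp_regular m n q (A : spmx F m n q) : Prop :=
  sprank A = (m, n, q).

Definition sp_zero m n q : spmx F m n q := fun _ _ _ => 0.

Definition sp_dsum m1 n1 q1 m2 n2 q2 (A : spmx F m1 n1 q1) (B : spmx F m2 n2 q2)
  : spmx F (m1 + m2) (n1 + n2) (q1 + q2) :=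
  fun i j k =>
    match split i, split j, split k with
    | inl i1, inl j1, inl k1 => A i1 j1 k1
    | inr i2, inr j2, inr k2 => B i2 j2 k2
    | _, _, _ => 0
    end.

Definition sp_cast m n q m' n' q' (e1 : m = m') (e2 : n = n') (e3 : q = q')
  (A : spmx F m n q) : spmx F m' n' q' :=
  fun i j k => A (cast_ord (esym e1) i) (cast_ord (esym e2) j) (cast_ord (esym e3) k).

Definition regular_part m n q r1 r2 r3 (A : spmx F m n q) (A' : spmx F r1 r2 r3)
  : Prop :=
  [/\ sprank A = (r1, r2, r3), sp_regular A' &
    exists (e1 : (r1 + (m - r1))%N = m) (e2 : (r2 + (n - r2))%N = n)
           (e3 : (r3 + (q - r3))%N = q),
      sp_equiv A (sp_cast e1 e2 e3
                    (sp_dsum A' (@sp_zero (m - r1)%N (n - r2)%N (q - r3)%N)))].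

End Spatial.

(* Main.v *)
Require Import Defs.
From mathcomp Require Import all_boot all_order all_algebra.
From Stdlib Require Import FunctionalExtensionality.
From mathcomp Require Import ring.
Set Implicit Arguments. Unset Strict Implicit. Unset Printing Implicit Defensive.
Import GRing.Theory.
Local Open Scope ring_scope.

Section S.
Variable F : fieldType.

Definition tr m n q (R : 'M[F]_m) (S : 'M[F]_n) (T : 'M[F]_q) (A : spmx F m n q)
  : spmx F m n q :=
  fun i' j' k' => \sum_(i < m) \sum_(j < n) \sum_(k < q)
                        A i j k * R i i' * S j j' * T k k'.

Definition m1 m n q (R : 'M[F]_m) (A : spmx F m n q) : spmx F m n q :=
  fun i' j k => \sum_(i < m) A i j k * R i i'.
Definition m2 m n q (S : 'M[F]_n) (A : spmx F m n q) : spmx F m n q :=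
  fun i j' k => \sum_(j < n) A i j k * S j j'.
Definition m3 m n q (T : 'M[F]_q) (A : spmx F m n q) : spmx F m n q :=
  fun i j k' => \sum_(k < q) A i j k * T k k'.

Lemma trE m n q R S T (A : spmx F m n q) : tr R S T A = m1 R (m2 S (m3 T A)).
Proof.
apply: functional_extensionality => i'; apply: functional_extensionality => j';
apply: functional_extensionality => k'.
rewrite /tr /m1 /m2 /m3; apply: eq_bigr => i _; rewrite mulr_suml.
apply: eq_bigr => j _; rewrite !mulr_suml; apply: eq_bigr => k _.
ring.
Qed.

Lemma m1M m n q R1 R2 (A : spmx F m n q) : m1 R2 (m1 R1 A) = m1 (R1 *m R2) A.
Proof.
apply: functional_extensionality => i'; apply: functional_extensionality => j;
apply: functional_extensionality => k.
rewrite /m1; under eq_bigr do rewrite mulr_suml.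
rewrite exchange_big; apply: eq_bigr => i _; rewrite mxE mulr_sumr.
by apply: eq_bigr => l _; rewrite mulrA.
Qed.
Lemma m2M m n q R1 R2 (A : spmx F m n q) : m2 R2 (m2 R1 A) = m2 (R1 *m R2) A.
Proof.
apply: functional_extensionality => i'; apply: functional_extensionality => j;
apply: functional_extensionality => k.
rewrite /m2; under eq_bigr do rewrite mulr_suml.
rewrite exchange_big; apply: eq_bigr => i _; rewrite mxE mulr_sumr.
by apply: eq_bigr => l _; rewrite mulrA.
Qed.
Lemma m3M m n q R1 R2 (A : spmx F m n q) : m3 R2 (m3 R1 A) = m3 (R1 *m R2) A.
Proof.
apply: functional_extensionality => i'; apply: functional_extensionality => j;
apply: functional_extensionality => k.
rewrite /m3; under eq_bigr do rewrite mulr_suml.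
rewrite exchange_big; apply: eq_bigr => i _; rewrite mxE mulr_sumr.
by apply: eq_bigr => l _; rewrite mulrA.
Qed.

Lemma m12 m n q R S (A : spmx F m n q) : m1 R (m2 S A) = m2 S (m1 R A).
Proof.
apply: functional_extensionality => i'; apply: functional_extensionality => j;
apply: functional_extensionality => k.
rewrite /m1 /m2; under eq_bigr do rewrite mulr_suml.
rewrite exchange_big; apply: eq_bigr => i _; rewrite mulr_suml.
by apply: eq_bigr => l _; rewrite mulrAC.
Qed.
Lemma m13 m n q R S (A : spmx F m n q) : m1 R (m3 S A) = m3 S (m1 R A).
Proof.
apply: functional_extensionality => i'; apply: functional_extensionality => j;
apply: functional_extensionality => k.
rewrite /m1 /m3; under eq_bigr do rewrite mulr_suml.
rewrite exchange_big; apply: eq_bigr => i _; rewrite mulr_suml.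
by apply: eq_bigr => l _; rewrite mulrAC.
Qed.
Lemma m23 m n q R S (A : spmx F m n q) : m2 R (m3 S A) = m3 S (m2 R A).
Proof.
apply: functional_extensionality => i'; apply: functional_extensionality => j;
apply: functional_extensionality => k.
rewrite /m2 /m3; under eq_bigr do rewrite mulr_suml.
rewrite exchange_big; apply: eq_bigr => i _; rewrite mulr_suml.
by apply: eq_bigr => l _; rewrite mulrAC.
Qed.

Lemma m1_1 m n q (A : spmx F m n q) : m1 1%:M A = A.
Proof.
apply: functional_extensionality => i'; apply: functional_extensionality => j;
apply: functional_extensionality => k.
rewrite /m1 (bigD1 i') //= big1 ?addr0 => [|i /negbTE ne]; rewrite mxE ?eqxx ?mulr1 //.
by rewrite ne mulr0.
Qed.
Lemma m2_1 m n q (A : spmx F m n q) : m2 1%:M A = A.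
Proof.
apply: functional_extensionality => i'; apply: functional_extensionality => j;
apply: functional_extensionality => k.
rewrite /m2 (bigD1 j) //= big1 ?addr0 => [|i /negbTE ne]; rewrite mxE ?eqxx ?mulr1 //.
by rewrite ne mulr0.
Qed.
Lemma m3_1 m n q (A : spmx F m n q) : m3 1%:M A = A.
Proof.
apply: functional_extensionality => i'; apply: functional_extensionality => j;
apply: functional_extensionality => k.
rewrite /m3 (bigD1 k) //= big1 ?addr0 => [|i /negbTE ne]; rewrite mxE ?eqxx ?mulr1 //.
by rewrite ne mulr0.
Qed.

Lemma trM m n q R1 S1 T1 R2 S2 T2 (A : spmx F m n q) :
  tr R2 S2 T2 (tr R1 S1 T1 A) = tr (R1 *m R2) (S1 *m S2) (T1 *m T2) A.
Proof.
rewrite !trE -m13 -m23 m3M -m12 m2M m1M.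
by [].
Qed.

Lemma tr1 m n q (A : spmx F m n q) : tr 1%:M 1%:M 1%:M A = A.
Proof. by rewrite trE m3_1 m2_1 m1_1. Qed.

Lemma equivP m n q (A B : spmx F m n q) : sp_equiv A B <->
  exists R S T, [/\ R \in unitmx, S \in unitmx, T \in unitmx & B = tr R S T A].
Proof.
split=> [[R [S [T [uR uS uT E]]]]|[R [S [T [uR uS uT E]]]]]; exists R, S, T; split=> //.
  apply: functional_extensionality => i'; apply: functional_extensionality => j;
  apply: functional_extensionality => k; exact: E.
by move=> i j k; rewrite E.
Qed.

Lemma equiv_refl m n q (A : spmx F m n q) : sp_equiv A A.
Proof. apply/equivP; exists 1%:M, 1%:M, 1%:M; by rewrite tr1 !unitmx1. Qed.

Lemma equiv_trans m n q (A B C : spmx F m n q) : sp_equiv A B -> sp_equiv B C -> sp_equiv A C.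
Proof.
move=> /equivP [R [S [T [uR uS uT ->]]]] /equivP [R' [S' [T' [uR' uS' uT' ->]]]].
apply/equivP; exists (R *m R'), (S *m S'), (T *m T'); rewrite trM !unitmx_mul.
by rewrite uR uS uT uR' uS' uT'.
Qed.

Lemma equiv_sym m n q (A B : spmx F m n q) : sp_equiv A B -> sp_equiv B A.
Proof.
move=> /equivP [R [S [T [uR uS uT ->]]]].
apply/equivP; exists (invmx R), (invmx S), (invmx T); rewrite trM !unitmx_inv.
by rewrite !mulmxV // tr1.
Qed.


Definition P2 m n q (A : spmx F m n q) : spmx F n m q := fun j i k => A i j k.
Definition P3 m n q (A : spmx F m n q) : spmx F q m n := fun k i j => A i j k.

Lemma slices2E m n q (A : spmx F m n q) : slices2 A = slices1 (P2 A).
Proof. by []. Qed.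
Lemma slices3E m n q (A : spmx F m n q) : slices3 A = slices1 (P3 A).
Proof. by []. Qed.

Lemma P2tr m n q R S T (A : spmx F m n q) : P2 (tr R S T A) = tr S R T (P2 A).
Proof.
apply: functional_extensionality => j'; apply: functional_extensionality => i';
apply: functional_extensionality => k'.
rewrite /P2 /tr exchange_big; apply: eq_bigr => j _; apply: eq_bigr => i _.
by apply: eq_bigr => k _; rewrite (mulrAC _ (R _ _)).
Qed.

Lemma P3tr m n q R S T (A : spmx F m n q) : P3 (tr R S T A) = tr T R S (P3 A).
Proof.
apply: functional_extensionality => k'; apply: functional_extensionality => i';
apply: functional_extensionality => j'.
rewrite /P3 /tr.
under eq_bigr do rewrite exchange_big.
rewrite exchange_big; apply: eq_bigr => k _; apply: eq_bigr => i _.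
apply: eq_bigr => j _; ring.
Qed.

Lemma sl_m1 m n q R (A : spmx F m n q) : slices1 (m1 R A) = R^T *m slices1 A.
Proof.
apply/matrixP => i' v; case/mxvec_indexP: v => j k.
rewrite !mxE mxvecE mxE /m1; apply: eq_bigr => i _.
by rewrite !mxE mxvecE mxE mulrC.
Qed.

Lemma sl_m2 m n q S (A : spmx F m n q) :
  slices1 (m2 S A) = slices1 A *m lin_mx (mulmx S^T).
Proof.
apply/row_matrixP => i; rewrite row_mul !rowK mul_vec_lin; congr mxvec.
apply/matrixP => j' k; rewrite !mxE /m2; apply: eq_bigr => j _.
by rewrite !mxE mulrC.
Qed.

Lemma sl_m3 m n q T (A : spmx F m n q) :
  slices1 (m3 T A) = slices1 A *m lin_mx (mulmxr T).
Proof.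
apply/row_matrixP => i; rewrite row_mul !rowK mul_vec_lin; congr mxvec.
apply/matrixP => j k'; rewrite !mxE /m3; apply: eq_bigr => k _.
by rewrite !mxE.
Qed.

Lemma rank_tr m n q R S T (A : spmx F m n q) :
  (\rank (slices1 (tr R S T A)) <= \rank (slices1 A))%N.
Proof.
rewrite trE sl_m1 (leq_trans (mxrankM_maxr _ _)) // sl_m2.
rewrite (leq_trans (mxrankM_maxl _ _)) // sl_m3.
exact: mxrankM_maxl.
Qed.

Lemma rank_equiv1 m n q (A B : spmx F m n q) : sp_equiv A B ->
  \rank (slices1 A) = \rank (slices1 B).
Proof.
move=> E; have E' := equiv_sym E.
move/equivP: E => [R [S [T [_ _ _ EB]]]].
move/equivP: E' => [R' [S' [T' [_ _ _ EA]]]].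
apply/eqP; rewrite eqn_leq; apply/andP; split; [rewrite {1}EA | rewrite {1}EB]; exact: rank_tr.
Qed.

Lemma sprank_equiv m n q (A B : spmx F m n q) : sp_equiv A B -> sprank A = sprank B.
Proof.
move=> E; rewrite /sprank !slices2E !slices3E (rank_equiv1 E); congr (_, _, _).
  apply: rank_equiv1; move/equivP: E => [R [S [T [uR uS uT ->]]]].
  by apply/equivP; exists S, R, T; rewrite P2tr.
apply: rank_equiv1; move/equivP: E => [R [S [T [uR uS uT ->]]]].
by apply/equivP; exists T, R, S; rewrite P3tr.
Qed.


Lemma split_l a b (i : 'I_a) : split (lshift b i) = inl i.
Proof. exact: (unsplitK (inl i)). Qed.
Lemma split_r a b (i : 'I_b) : split (rshift a i) = inr i.
Proof. exact: (unsplitK (inr i)). Qed.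

Lemma ordP a b (i : 'I_(a + b)) : {i0 | i = lshift b i0} + {i0 | i = rshift a i0}.
Proof.
rewrite -[i]splitK; case: (split i) => i0 /=; [left|right]; by exists i0.
Qed.

Section Blocks.
Variables r1 r2 r3 p1 p2 p3 : nat.
Notation Z := (@sp_zero F p1 p2 p3).

Lemma dsum_lll (X : spmx F r1 r2 r3) i j k :
  sp_dsum X Z (lshift p1 i) (lshift p2 j) (lshift p3 k) = X i j k.
Proof. by rewrite /sp_dsum !split_l. Qed.
Lemma dsum_r1 (X : spmx F r1 r2 r3) i j k : sp_dsum X Z (rshift r1 i) j k = 0.
Proof. by rewrite /sp_dsum split_r; case: (split j) => ?; case: (split k). Qed.
Lemma dsum_r2 (X : spmx F r1 r2 r3) i j k : sp_dsum X Z i (rshift r2 j) k = 0.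
Proof. by rewrite /sp_dsum split_r; case: (split i) => ?; case: (split k). Qed.
Lemma dsum_r3 (X : spmx F r1 r2 r3) i j k : sp_dsum X Z i j (rshift r3 k) = 0.
Proof. by rewrite /sp_dsum split_r; case: (split i) => ?; case: (split j). Qed.

Lemma m1_dsum (R : 'M[F]_(r1 + p1)) (X : spmx F r1 r2 r3) : ursubmx R = 0 ->
  m1 R (sp_dsum X Z) = sp_dsum (m1 (ulsubmx R) X) Z.
Proof.
move=> HR.
apply: functional_extensionality => i'; apply: functional_extensionality => j;
apply: functional_extensionality => k.
rewrite /m1 big_split_ord /= [X in _ + X]big1 ?addr0; last first.
  by move=> i _; rewrite dsum_r1 mul0r.
case: (ordP i') => [[i0 ->]|[i0 ->]]; last first.
  rewrite dsum_r1 big1 // => i _.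
  have: ursubmx R i i0 = 0 by rewrite HR mxE.
  by rewrite !mxE => ->; rewrite mulr0.
case: (ordP j) => [[j0 ->]|[j0 ->]]; last first.
  by rewrite dsum_r2 big1 // => i _; rewrite dsum_r2 mul0r.
case: (ordP k) => [[k0 ->]|[k0 ->]]; last first.
  by rewrite dsum_r3 big1 // => i _; rewrite dsum_r3 mul0r.
rewrite dsum_lll /m1; apply: eq_bigr => i _; by rewrite dsum_lll !mxE.
Qed.

Lemma m2_dsum (R : 'M[F]_(r2 + p2)) (X : spmx F r1 r2 r3) : ursubmx R = 0 ->
  m2 R (sp_dsum X Z) = sp_dsum (m2 (ulsubmx R) X) Z.
Proof.
move=> HR.
apply: functional_extensionality => j; apply: functional_extensionality => i';
apply: functional_extensionality => k.
rewrite /m2 big_split_ord /= [X in _ + X]big1 ?addr0; last first.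
  by move=> i _; rewrite dsum_r2 mul0r.
case: (ordP i') => [[i0 ->]|[i0 ->]]; last first.
  rewrite dsum_r2 big1 // => i _.
  have: ursubmx R i i0 = 0 by rewrite HR mxE.
  by rewrite !mxE => ->; rewrite mulr0.
case: (ordP j) => [[j0 ->]|[j0 ->]]; last first.
  by rewrite dsum_r1 big1 // => i _; rewrite dsum_r1 mul0r.
case: (ordP k) => [[k0 ->]|[k0 ->]]; last first.
  by rewrite dsum_r3 big1 // => i _; rewrite dsum_r3 mul0r.
rewrite dsum_lll /m2; apply: eq_bigr => i _; by rewrite dsum_lll !mxE.
Qed.

Lemma m3_dsum (R : 'M[F]_(r3 + p3)) (X : spmx F r1 r2 r3) : ursubmx R = 0 ->
  m3 R (sp_dsum X Z) = sp_dsum (m3 (ulsubmx R) X) Z.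
Proof.
move=> HR.
apply: functional_extensionality => j; apply: functional_extensionality => k;
apply: functional_extensionality => i'.
rewrite /m3 big_split_ord /= [X in _ + X]big1 ?addr0; last first.
  by move=> i _; rewrite dsum_r3 mul0r.
case: (ordP i') => [[i0 ->]|[i0 ->]]; last first.
  rewrite dsum_r3 big1 // => i _.
  have: ursubmx R i i0 = 0 by rewrite HR mxE.
  by rewrite !mxE => ->; rewrite mulr0.
case: (ordP j) => [[j0 ->]|[j0 ->]]; last first.
  by rewrite dsum_r1 big1 // => i _; rewrite dsum_r1 mul0r.
case: (ordP k) => [[k0 ->]|[k0 ->]]; last first.
  by rewrite dsum_r2 big1 // => i _; rewrite dsum_r2 mul0r.
rewrite dsum_lll /m3; apply: eq_bigr => i _; by rewrite dsum_lll !mxE.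
Qed.

Lemma tr_dsum R S T (X : spmx F r1 r2 r3) :
  ursubmx R = 0 -> ursubmx S = 0 -> ursubmx T = 0 ->
  tr R S T (sp_dsum X Z) = sp_dsum (tr (ulsubmx R) (ulsubmx S) (ulsubmx T) X) Z.
Proof.
by move=> HR HS HT; rewrite !trE m3_dsum // m2_dsum // m1_dsum.
Qed.

Definition indep1 (X : spmx F r1 r2 r3) :=
  forall c : 'I_r1 -> F, (forall j k, \sum_i X i j k * c i = 0) -> forall i, c i = 0.

Lemma zero_block R S T (X Y : spmx F r1 r2 r3) :
  S \in unitmx -> T \in unitmx -> indep1 X ->
  sp_dsum Y Z = tr R S T (sp_dsum X Z) -> ursubmx R = 0.
Proof.
move=> uS uT iX E.
have H : m1 R (sp_dsum X Z) = m2 (invmx S) (m3 (invmx T) (sp_dsum Y Z)).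
  rewrite E trE -m13 -m23 m3M mulmxV // m3_1 -m12 m2M mulmxV // m2_1 //.
apply/matrixP => i i''; rewrite !mxE.
apply: (iX (fun i => R (lshift p1 i) (rshift r1 i''))) => j k.
have := congr1 (fun f => f (rshift r1 i'') (lshift p2 j) (lshift p3 k)) H.
rewrite /= {1}/m1 big_split_ord /= [X in _ + X]big1 ?addr0; last first.
  by move=> i0 _; rewrite dsum_r1 mul0r.
rewrite /m2 [X in _ = X -> _]big1; last first.
  move=> j' _; rewrite /m3 big1 ?mul0r // => k' _; by rewrite dsum_r1 mul0r.
move=> H0; rewrite -[RHS]H0; apply: eq_bigr => i0 _; by rewrite dsum_lll.
Qed.

Lemma indep_reg (X : spmx F r1 r2 r3) : \rank (slices1 X) = r1 -> indep1 X.
Proof.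
move=> rk c Hc i.
have fr : row_free (slices1 X) by rewrite /row_free rk.
have : (\row_i c i) *m slices1 X == 0.
  apply/eqP/matrixP => z v; case/mxvec_indexP: v => j k.
  rewrite !mxE -[RHS](Hc j k); apply: eq_bigr => i0 _.
  by rewrite !mxE mxvecE mxE mulrC.
rewrite mulmx_free_eq0 // => /eqP/matrixP/(_ 0 i).
by rewrite !mxE.
Qed.

End Blocks.


Lemma P2dsum r1 r2 r3 p1 p2 p3 (X : spmx F r1 r2 r3) :
  P2 (sp_dsum X (@sp_zero F p1 p2 p3)) = sp_dsum (P2 X) (@sp_zero F p2 p1 p3).
Proof.
apply: functional_extensionality => j; apply: functional_extensionality => i;
apply: functional_extensionality => k.
by rewrite /P2 /sp_dsum; case: (split i) => ?; case: (split j) => ?; case: (split k).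
Qed.
Lemma P3dsum r1 r2 r3 p1 p2 p3 (X : spmx F r1 r2 r3) :
  P3 (sp_dsum X (@sp_zero F p1 p2 p3)) = sp_dsum (P3 X) (@sp_zero F p3 p1 p2).
Proof.
apply: functional_extensionality => j; apply: functional_extensionality => i;
apply: functional_extensionality => k.
by rewrite /P3 /sp_dsum; case: (split i) => ?; case: (split j) => ?; case: (split k).
Qed.

Lemma ul_unit a b (R : 'M[F]_(a + b)) : R \in unitmx -> ursubmx R = 0 ->
  ulsubmx R \in unitmx.
Proof.
move=> uR HR; move: uR.
rewrite -[R in R \in unitmx]submxK HR unitmxE det_lblock unitrM => /andP[].
by rewrite unitmxE.
Qed.

Lemma block_equiv r1 r2 r3 p1 p2 p3 (X Y : spmx F r1 r2 r3) :
  sp_regular X ->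
  sp_equiv (sp_dsum X (@sp_zero F p1 p2 p3)) (sp_dsum Y (@sp_zero F p1 p2 p3)) ->
  sp_equiv X Y.
Proof.
rewrite /sp_regular /sprank => -[rk1 rk2 rk3] /equivP [R [S [T [uR uS uT E]]]].
have zR : ursubmx R = 0.
  by apply: (zero_block uS uT (indep_reg rk1) E).
have zS : ursubmx S = 0.
  apply: (zero_block (X := P2 X) (Y := P2 Y) uR uT).
    by apply: indep_reg; rewrite -slices2E.
  by rewrite -P2dsum E P2tr P2dsum.
have zT : ursubmx T = 0.
  apply: (zero_block (X := P3 X) (Y := P3 Y) uR uS).
    by apply: indep_reg; rewrite -slices3E.
  by rewrite -P3dsum E P3tr P3dsum.
apply/equivP; exists (ulsubmx R), (ulsubmx S), (ulsubmx T).
split; try exact: ul_unit.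
rewrite tr_dsum // in E.
apply: functional_extensionality => i; apply: functional_extensionality => j;
apply: functional_extensionality => k.
have := congr1 (fun f => f (lshift p1 i) (lshift p2 j) (lshift p3 k)) E.
by rewrite /= !dsum_lll.
Qed.

Lemma dsum_equiv r1 r2 r3 p1 p2 p3 (X Y : spmx F r1 r2 r3) :
  sp_equiv X Y ->
  sp_equiv (sp_dsum X (@sp_zero F p1 p2 p3)) (sp_dsum Y (@sp_zero F p1 p2 p3)).
Proof.
move=> /equivP [R [S [T [uR uS uT ->]]]].
apply/equivP; exists (block_mx R 0 0 1%:M), (block_mx S 0 0 1%:M), (block_mx T 0 0 1%:M).
rewrite !unitmxE !det_lblock !det1 !mulr1 -!unitmxE uR uS uT; split=> //.
by rewrite tr_dsum ?block_mxKur // !block_mxKul.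
Qed.

Lemma sp_cast_id m n q (e1 : m = m) (e2 : n = n) (e3 : q = q) (X : spmx F m n q) :
  sp_cast e1 e2 e3 X = X.
Proof.
apply: functional_extensionality => i; apply: functional_extensionality => j;
apply: functional_extensionality => k.
by rewrite /sp_cast !cast_ord_id.
Qed.

Lemma equiv_cast m n q m' n' q' (e1 : m = m') (e2 : n = n') (e3 : q = q')
  (X Y : spmx F m n q) :
  sp_equiv X Y -> sp_equiv (sp_cast e1 e2 e3 X) (sp_cast e1 e2 e3 Y).
Proof.
case: m' / e1; case: n' / e2; case: q' / e3.
by rewrite !sp_cast_id.
Qed.

Lemma cast_inv m n q m' n' q' (e1 : m = m') (e2 : n = n') (e3 : q = q')
  (X : spmx F m n q) :
  sp_cast (esym e1) (esym e2) (esym e3) (sp_cast e1 e2 e3 X) = X.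
Proof.
case: m' / e1; case: n' / e2; case: q' / e3.
by rewrite !sp_cast_id.
Qed.

End S.

Theorem lemma4p2 (F : fieldType) (m n q : nat) (A B : spmx F m n q)
  (r1 r2 r3 : nat) (A' : spmx F r1 r2 r3)
  (s1 s2 s3 : nat) (B' : spmx F s1 s2 s3) :
  regular_part A A' -> regular_part B B' ->
  (sp_equiv A B <->
   exists (e1 : r1 = s1) (e2 : r2 = s2) (e3 : r3 = s3),
     sp_equiv (sp_cast e1 e2 e3 A') B').
Proof.
move=> [rA regA [e1 [e2 [e3 HA]]]] [rB regB [f1 [f2 [f3 HB]]]]; split.
  move=> HAB.
  have : (r1, r2, r3) = (s1, s2, s3) by rewrite -rA -rB; exact: sprank_equiv.
  case=> E1 E2 E3; subst s1 s2 s3.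
  exists erefl, erefl, erefl; rewrite sp_cast_id.
  have ef1 : f1 = e1 by apply: eq_irrelevance.
  have ef2 : f2 = e2 by apply: eq_irrelevance.
  have ef3 : f3 = e3 by apply: eq_irrelevance.
  subst f1 f2 f3.
  have H := equiv_trans (equiv_trans (equiv_sym HA) HAB) HB.
  move: (equiv_cast (esym e1) (esym e2) (esym e3) H); rewrite !cast_inv => H'.
  exact: block_equiv regA H'.
case=> E1 [E2 [E3 H]]; subst s1 s2 s3.
rewrite sp_cast_id in H.
have ef1 : f1 = e1 by apply: eq_irrelevance.
have ef2 : f2 = e2 by apply: eq_irrelevance.
have ef3 : f3 = e3 by apply: eq_irrelevance.
subst f1 f2 f3.
apply: equiv_trans HA _; apply: equiv_trans _ (equiv_sym HB).
apply: equiv_cast; exact: dsum_equiv H.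
Qed.
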